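(* Let $1\le k\le n$, let $\mu\in\mathbb{N}^n$ be packed of type $(k,n)$ (i.e. $\mu_i\ne0$ for $i\le k$ and $\mu_i=0$ for $i>k$), and let $\nu\in\mathbb{N}^n$ be such that $\nu_{i_0}=0$ for some $i_0\le k$. Then $\mu\not\preceq\nu$, $E^*_\mu(\widetilde\nu)=0$ and $f^*_\mu(\widetilde\nu)=0$.
   Context: Polynomials are in $x_1,\dots,x_n$ over $\mathbb{Q}(q,t)$. For $\mu\in\mathbb{N}^n$ let $k_i(\mu)=\#\{j<i:\mu_j>\mu_i\}+\#\{j>i:\mu_j\ge\mu_i\}$ and $\widetilde\mu=(q^{\mu_1}t^{-k_1(\mu)},\dots,q^{\mu_n}t^{-k_n(\mu)})$. For $\mu\in\mathbb{N}^n$, $|\mu|=d$, $E^*_\mu$ is the unique polynomial of degree at most $d$ with coefficient of $x^\mu$ equal to $1$ and $E^*_\mu(\widetilde\nu)=0$ for all $\nu\in\mathbb{N}^n$, $|\nu|\le d$, $\nu\ne\mu$. $S_n$ acts on compositions by $\sigma\cdot\mu=(\mu_{\sigma^{-1}(1)},\dots,\mu_{\sigma^{-1}(n)})$ and on polynomials by permuting variables; $s_i=(i,i+1)$; $T_i=t-\frac{tx_i-x_{i+1}}{x_i-x_{i+1}}(1-s_i)$; $T_\sigma=T_{i_1}\cdots T_{i_\ell}$ for a reduced word. For a composition $\mu$ with sorted partition $\lambda$, $\sigma_\mu$ is the shortest permutation with $\sigma_\mu(\lambda)=\mu$, and $f^*_\mu=T_{\sigma_\mu}E^*_\lambda$.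 For $\mu,\nu\in\mathbb{N}^n$, $\mu\preceq\nu$ means there exists $\pi\in S_n$ with $\mu_i\le\nu_{\pi(i)}$ for all $i$, and $\mu_i<\nu_{\pi(i)}$ whenever $i>\pi(i)$. *)

(* Defs.v *)
From HB Require Import structures.
From mathcomp Require Import all_boot all_order all_algebra all_fingroup.
From mathcomp Require Import fraction.
From mathcomp Require Import mpoly.
From Stdlib Require Import ClassicalEpsilon.

Set Implicit Arguments.
Unset Strict Implicit.
Unset Printing Implicit Defensive.

Import GRing.Theory.

(* The base field Q(q,t), realised as the fraction field of Q[q][t]. *)
Notation QqtK := {fraction {poly {poly rat}}}.

Definition qpar : QqtK := @FracField.tofrac _ (('X : {poly rat})%:P)%R.
Definition tpar : QqtK := @FracField.tofrac _ ('X : {poly {poly rat}})%R.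

(* Compositions mu in N^n are multi-indices 'X_{1..n}; indices are 0-based:
   paper index i (1..n) corresponds to the ordinal i-1. *)

Definition kstat (n : nat) (mu : 'X_{1..n}) (i : 'I_n) : nat :=
  #|[set j : 'I_n | ((j < i) && (mu i < mu j)) || ((i < j) && (mu i <= mu j))]|.

Definition tilde (n : nat) (mu : 'X_{1..n}) : 'I_n -> QqtK :=
  fun i => (qpar ^+ (mu i) * tpar ^- (kstat mu i))%R.

(* E is the interpolation polynomial E^*_mu : degree at most |mu|,
   coefficient of x^mu equal to 1, vanishing at tilde nu for |nu| <= |mu|, nu <> mu. *)
Definition is_Estar (n : nat) (mu : 'X_{1..n}) (E : {mpoly QqtK[n]}) : Prop :=
  [/\ msize E <= (mdeg mu).+1,
      (E@_mu)%R = 1%R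
    & forall nu : 'X_{1..n}, mdeg nu <= mdeg mu -> nu != mu -> E.@[tilde nu] = 0%R].

Definition act_comp (n : nat) (s : 'S_n) (mu : 'X_{1..n}) : 'X_{1..n} :=
  [multinom mu ((s^-1)%g i) | i < n].

(* Coxeter length = number of inversions *)
Definition perm_length (n : nat) (s : 'S_n) : nat :=
  #|[set p : 'I_n * 'I_n | (p.1 < p.2) && (s p.2 < s p.1)]|.

(* the simple transposition s_i = (i, i+1) (0-based i, requires i+1 < n) *)
Definition sperm (n : nat) (i : nat) : 'S_n :=
  match (insub i : option 'I_n), (insub i.+1 : option 'I_n) with
  | Some a, Some b => tperm a b
  | _, _ => 1%g
  end.

(* the permutation s_{i1} o s_{i2} o ... o s_{il} (composition of maps) of a word *)
Definition word_perm (n : nat) (w : seq nat) : 'S_n :=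
  foldr (fun i s => (s * sperm n i)%g) 1%g w.

Definition is_reduced_word (n : nat) (s : 'S_n) (w : seq nat) : Prop :=
  [/\ all (fun i => i.+1 < n) w, word_perm n w = s & size w = perm_length s].

Definition sorted_part (n : nat) (mu : 'X_{1..n}) : 'X_{1..n} :=
  [multinom nth 0 (sort geq [seq mu i | i <- enum 'I_n]) i | i < n].

Definition shortest_perm (n : nat) (lam mu : 'X_{1..n}) (s : 'S_n) : Prop :=
  act_comp s lam = mu /\
  forall s' : 'S_n, act_comp s' lam = mu -> perm_length s <= perm_length s'.

(* the variable x_i (0-based), or 0 if out of range *)
Definition xvar (n : nat) (i : nat) : {mpoly QqtK[n]} :=
  match (insub i : option 'I_n) with Some j => 'X_j | None => 0%R end.

(* g = T_i f, where T_i = t - (t x_i - x_{i+1})/(x_i - x_{i+1}) (1 - s_i),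
   written after clearing the denominator x_i - x_{i+1}. *)
Definition Hecke_spec (n : nat) (i : nat) (f g : {mpoly QqtK[n]}) : Prop :=
  ((xvar n i - xvar n i.+1) * g =
   tpar%:MP * (xvar n i - xvar n i.+1) * f
   - (tpar%:MP * xvar n i - xvar n i.+1) * (f - msym (sperm n i) f))%R.

Definition Hecke (n : nat) (i : nat) (f : {mpoly QqtK[n]}) : {mpoly QqtK[n]} :=
  epsilon (inhabits 0%R) (Hecke_spec i f).

Definition Hecke_word (n : nat) (w : seq nat) (f : {mpoly QqtK[n]}) : {mpoly QqtK[n]} :=
  foldr (fun i g => Hecke i g) f w.

Definition is_fstar (n : nat) (mu : 'X_{1..n}) (F : {mpoly QqtK[n]}) : Prop :=
  exists (E : {mpoly QqtK[n]}) (s : 'S_n) (w : seq nat),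
    [/\ is_Estar (sorted_part mu) E,
        shortest_perm (sorted_part mu) mu s,
        is_reduced_word s w
      & F = Hecke_word w E].

Definition preceq (n : nat) (mu nu : 'X_{1..n}) : Prop :=
  exists pi : 'S_n, forall i : 'I_n,
    mu i <= nu (pi i) /\ (pi i < i -> mu i < nu (pi i)).

(* Main.v *)
Require Import Defs.
From HB Require Import structures.
From mathcomp Require Import all_boot all_order all_algebra all_fingroup.
From mathcomp Require Import fraction.
From mathcomp Require Import mpoly.
From mathcomp Require Import ring zify.
From Stdlib Require Import ClassicalEpsilon.

Module Mod_A.
Set Implicit Arguments. Unset Strict Implicit. Unset Printing Implicit Defensive.
Import GRing.Theory.
Local Open Scope ring_scope.

Lemma qt_poly a b : qpar ^+ a * tpar ^+ b =
  @FracField.tofrac _ ((('X : {poly rat}) ^+ a)%:P * 'X ^+ b).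
Proof. by rewrite /qpar /tpar rmorphM /= !rmorphXn /= -rmorphXn. Qed.

Lemma qt_inj a b c e : qpar ^+ a * tpar ^+ b = qpar ^+ c * tpar ^+ e -> a = c /\ b = e.
Proof.
rewrite !qt_poly => /eqP; rewrite tofrac_eq => /eqP H.
have := congr1 (fun p : {poly {poly rat}} => p`_b) H.
rewrite !coefCM !coefXn eqxx mulr1.
case: eqP => [<-|_]; last by rewrite mulr0 => /eqP; rewrite expf_eq0 polyX_eq0 andbF.
rewrite mulr1 => /(congr1 (fun p : {poly rat} => size p)).
by rewrite !size_polyXn => -[].
Qed.

Lemma qpar_neq0 : qpar != 0.
Proof. by rewrite /qpar tofrac_eq0 polyC_eq0 polyX_eq0. Qed.
Lemma tpar_neq0 : tpar != 0.
Proof. by rewrite /tpar tofrac_eq0 polyX_eq0. Qed.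

Lemma qtm_inj a b c e : qpar ^+ a * tpar ^- b = qpar ^+ c * tpar ^- e -> a = c /\ b = e.
Proof.
move=> H.
have Ht : forall m, tpar ^+ m != 0 by move=> m; rewrite expf_neq0 // tpar_neq0.
have : qpar ^+ a * tpar ^+ e = qpar ^+ c * tpar ^+ b.
  have E1 : forall x y z : QqtK, y != 0 -> x * z = x * y^-1 * (y * z).
    by move=> x y z yn; rewrite -mulrA (mulrA y^-1) mulVf // mul1r.
  rewrite (E1 _ _ _ (Ht b)) H -!mulrA; congr (_ * _).
  by rewrite mulrC -mulrA mulfV // mulr1.
by case/qt_inj=> -> ->.
Qed.

End Mod_A.
Import Mod_A.

Module Mod_B.
Set Implicit Arguments. Unset Strict Implicit. Unset Printing Implicit Defensive.
Import GRing.Theory.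
Local Open Scope ring_scope.

Definition pt := nat -> QqtK.
Definition cons_pt (c : QqtK) (y : pt) : pt := fun i => if i is j.+1 then y j else c.
Definition shift (x : pt) : pt := fun i => x i.+1.

Inductive PF (n : nat) : nat -> (pt -> QqtK) -> Prop :=
| PFc d c : PF n d (fun _ => c)
| PFv d i : (i < n)%N -> (0 < d)%N -> PF n d (fun x => x i)
| PFadd d F G : PF n d F -> PF n d G -> PF n d (fun x => F x + G x)
| PFmul d1 d2 F G : PF n d1 F -> PF n d2 G -> PF n (d1 + d2) (fun x => F x * G x)
| PFext d F G : PF n d F -> (forall x, F x = G x) -> PF n d G.

Lemma PF_mono n d F : PF n d F -> forall d', (d <= d')%N -> PF n d' F.
Proof.
elim=> {d F} [d c|d i ??|d F G _ IF _ IG|d1 d2 F G _ IF _ IG|d F G _ IF e] d' le.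
- exact: PFc.
- by apply: PFv => //; apply: leq_trans le.
- by apply: PFadd; [apply: IF|apply: IG].
- have -> : d' = (d1 + (d' - d1))%N by rewrite subnKC // (leq_trans (leq_addr _ _) le).
  apply: PFmul; first exact: IF.
  by apply: IG; rewrite leq_subRL // (leq_trans (leq_addr _ _) le).
- exact: PFext (IF _ le) e.
Qed.

Lemma PF_dep n d F : PF n d F -> forall x y, (forall i, (i < n)%N -> x i = y i) -> F x = F y.
Proof.
elim=> {d F} [d c|d i ??|d F G _ IF _ IG|d1 d2 F G _ IF _ IG|d F G _ IF e] x y H //=.
- exact: H.
- by rewrite (IF x y H) (IG x y H).
- by rewrite (IF x y H) (IG x y H).
- by rewrite -!e (IF x y H).
Qed.

Lemma PF_const0 n d F : PF n d F -> d = 0%N -> forall x y, F x = F y.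
Proof.
elim=> {d F} [d c|d i ? lt|d F G _ IF _ IG|d1 d2 F G _ IF _ IG|d F G _ IF e] d0 x y //=.
- by rewrite d0 in lt.
- by rewrite (IF d0 x y) (IG d0 x y).
- by move/eqP: d0; rewrite addn_eq0 => /andP[/eqP a /eqP b]; rewrite (IF a x y) (IG b x y).
- by rewrite -!e (IF d0 x y).
Qed.

Lemma PF_subst n d G : PF n d G -> forall n' (s : pt -> pt),
  (forall i, (i < n)%N -> PF n' 1 (fun y => s y i)) -> PF n' d (fun y => G (s y)).
Proof.
elim=> {d G} [d c|d i lti lt|d F G _ IF _ IG|d1 d2 F G _ IF _ IG|d F G _ IF e] n' s H.
- exact: PFc.
- by apply: PFext (PF_mono (H _ lti) lt) _.
- exact: PFadd (IF _ _ H) (IG _ _ H).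
- exact: PFmul (IF _ _ H) (IG _ _ H).
- by apply: PFext (IF _ _ H) _ => y; rewrite e.
Qed.

Lemma PF_sum n d (T : Type) (r : seq T) (F : T -> pt -> QqtK) :
  (forall a, PF n d (F a)) -> PF n d (fun x => \sum_(a <- r) F a x).
Proof.
move=> H; elim: r => [|a r IH].
  by apply: (PFext (PFc _ _ 0)) => x; rewrite big_nil.
by apply: (PFext (PFadd (H a) IH)) => x; rewrite big_cons.
Qed.

Lemma PF_prod n (T : Type) (r : seq T) (F : T -> pt -> QqtK) (dg : T -> nat) :
  (forall a, PF n (dg a) (F a)) -> PF n (\sum_(a <- r) dg a) (fun x => \prod_(a <- r) F a x).
Proof.
move=> H; elim: r => [|a r IH].
  by rewrite big_nil; apply: (PFext (PFc _ _ 1)) => x; rewrite big_nil.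
by rewrite big_cons; apply: (PFext (PFmul (H a) IH)) => x; rewrite big_cons.
Qed.

Lemma PF_scale n d c F : PF n d F -> PF n d (fun x => c * F x).
Proof. by move=> H; rewrite -[d]add0n; apply: PFmul (PFc _ _ _) H. Qed.

Lemma PF_divdiff n d F : PF n d F -> (0 < n)%N -> forall c, exists G, PF n d.-1 G /\
  forall x, F x = F (cons_pt c (shift x)) + (x 0%N - c) * G x.
Proof.
move=> HF n0 c.
elim: HF => {d F} [d a|d i lt d0|d F G HF IF HG IG|d1 d2 F G HF IF HG IG|d F G _ IF e].
- by exists (fun _ => 0); split; [exact: PFc|move=> x; rewrite mulr0 addr0].
- case: i lt => [|i] lt.
    exists (fun _ => 1); split; first exact: PFc.
    by move=> x /=; rewrite mulr1 addrC subrK.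
  by exists (fun _ => 0); split; [exact: PFc|move=> x; rewrite mulr0 addr0].
- case: IF => G1 [P1 E1]; case: IG => G2 [P2 E2].
  exists (fun x => G1 x + G2 x); split; first exact: PFadd.
  by move=> x /=; rewrite [F x]E1 [G x]E2 mulrDr addrACA.
- case: IF => G1 [P1 E1]; case: IG => G2 [P2 E2].
  have sub : forall n1 F1, PF n n1 F1 -> PF n n1 (fun x => F1 (cons_pt c (shift x))).
    move=> n1 F1 HF1; apply: (PF_subst HF1 (s := fun x => cons_pt c (shift x))) => -[|i] lti /=.
      exact: PFc.
    exact: (PFv (n := n) (d := 1) (i := i.+1)).
  case: d1 HF P1 E1 => [|d1] HF P1 E1.
    exists (fun x => F (cons_pt c (shift x)) * G2 x); split.
      by have := PFmul (sub _ _ HF) P2; rewrite !add0n.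
    move=> x /=; rewrite (PF_const0 HF erefl x (cons_pt c (shift x))) [G x]E2; ring.
  case: d2 HG P2 E2 => [|d2] HG P2 E2.
    exists (fun x => G1 x * G (cons_pt c (shift x))); split.
      by have := PFmul P1 (sub _ _ HG); rewrite !addn0.
    move=> x /=; rewrite (PF_const0 HG erefl x (cons_pt c (shift x))) [F x]E1; ring.
  exists (fun x => G1 x * G x + F (cons_pt c (shift x)) * G2 x); split.
    apply: PFadd.
      have -> : ((d1.+1 + d2.+1).-1 = d1 + d2.+1)%N by rewrite addSn.
      exact: PFmul P1 HG.
    have -> : ((d1.+1 + d2.+1).-1 = d1.+1 + d2)%N by rewrite addnS.
    exact: PFmul (sub _ _ HF) P2.
  move=> x /=.
  rewrite [F x]E1 [G x]E2; ring.
- case: IF => G1 [P1 E1]; exists G1; split => // x; by rewrite -!e.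
Qed.

Lemma PF_sum_in n d (T : eqType) (r : seq T) (F : T -> pt -> QqtK) :
  (forall a, a \in r -> PF n d (F a)) -> PF n d (fun x => \sum_(a <- r) F a x).
Proof.
elim: r => [|a r IH] H.
  by apply: (PFext (PFc _ _ 0)) => x; rewrite big_nil.
apply: (PFext (PFadd (H a (mem_head _ _)) (IH _))) => [b br|x]; last by rewrite big_cons.
by apply: H; rewrite in_cons br orbT.
Qed.

Lemma PF_pow n i k : (i < n)%N -> PF n k (fun x => x i ^+ k).
Proof.
move=> lt; elim: k => [|k IH].
  by apply: (PFext (PFc _ _ 1)) => x; rewrite expr0.
by rewrite -add1n; apply: (PFext (PFmul (PFv lt (isT : (0 < 1)%N)) IH)) => x; rewrite exprS.
Qed.

Lemma PF_mpoly n (E : {mpoly QqtK[n]}) d : (msize E <= d.+1)%N ->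
  PF n d (fun x => E.@[fun i : 'I_n => x i]).
Proof.
move=> Hs; apply: PFext; last by move=> x; rewrite mevalE.
apply: PF_sum_in => m mE; apply: PF_scale.
have H := msize_mdeg_lt mE.
apply: (PF_mono (d := mdeg m)); last by rewrite -ltnS (leq_trans H).
rewrite mdegE; apply: PF_prod => i; exact: PF_pow.
Qed.

End Mod_B.
Import Mod_B.

Module Mod_C.
Set Implicit Arguments. Unset Strict Implicit. Unset Printing Implicit Defensive.
Import GRing.Theory.
Local Open Scope ring_scope.

Definition kst (n : nat) (nu : nat -> nat) (i : nat) : nat :=
  (\sum_(j < n) ((((j < i) && (nu i < nu j)) || ((i < j) && (nu i <= nu j))) : nat))%N.
Definition tl n nu : pt := fun i => qpar ^+ nu i * tpar ^- kst n nu i.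
Definition sz n (nu : nat -> nat) : nat := (\sum_(j < n) nu j)%N.
Definition cons0 (nu : nat -> nat) : nat -> nat := fun i => if i is j.+1 then nu j else 0%N.
Definition psi m (r : nat -> nat) : nat -> nat := fun i => if i is j.+1 then r j else (r m).+1.
Definition unpsi m (nu : nat -> nat) : nat -> nat := fun i => if i == m then (nu 0%N).-1 else nu i.+1.
Definition rot m (y : pt) : pt := cons_pt (qpar * y m) y.

Lemma kst_ext n nu nu' i : (forall j, (j < n)%N -> nu j = nu' j) -> (i < n)%N ->
  kst n nu i = kst n nu' i.
Proof. by move=> H lt; apply: eq_bigr => j _; rewrite !H. Qed.

Lemma tl_ext n nu nu' i : (forall j, (j < n)%N -> nu j = nu' j) -> (i < n)%N ->
  tl n nu i = tl n nu' i.
Proof. by move=> H lt; rewrite /tl (kst_ext H lt) H. Qed.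

Lemma sz_ext n nu nu' : (forall j, (j < n)%N -> nu j = nu' j) -> sz n nu = sz n nu'.
Proof. by move=> H; apply: eq_bigr => j _; rewrite H. Qed.

Lemma kst_cons0_0 m nu : kst m.+1 (cons0 nu) 0 = m.
Proof.
rewrite /kst big_ord_recl /= add0n.
transitivity (\sum_(j < m) 1)%N; last by rewrite sum_nat_const card_ord muln1.
by apply: eq_bigr => j _.
Qed.

Lemma kst_cons0_S m nu j : kst m.+1 (cons0 nu) j.+1 = kst m nu j.
Proof.
rewrite /kst big_ord_recl /= add0n; apply: eq_bigr => k _.
by rewrite /bump /= !add1n !ltnS.
Qed.

Lemma tl_cons0 m nu i : tl m.+1 (cons0 nu) i = cons_pt (tpar ^- m) (tl m nu) i.
Proof.
case: i => [|j]; first by rewrite /tl /= kst_cons0_0 expr0 mul1r.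
by rewrite /tl /= kst_cons0_S.
Qed.

Lemma sz_cons0 m nu : sz m.+1 (cons0 nu) = sz m nu.
Proof. by rewrite /sz big_ord_recl. Qed.

Lemma kst0 m nu : nu 0%N = 0%N -> kst m.+1 nu 0 = m.
Proof.
move=> h; rewrite (@kst_ext _ _ (cons0 (fun i => nu i.+1))) ?kst_cons0_0 // => -[|j] _ //.
Qed.

Lemma kst_psi_0 m r : kst m.+1 (psi m r) 0 = kst m.+1 r m.
Proof.
rewrite /kst big_ord_recl big_ord_recr /= ltnn /= add0n addn0.
by apply: eq_bigr => j _; rewrite add0n ltn_ord /= [(m < j)%N]ltnNge (ltnW (ltn_ord j)) /= orbF.
Qed.

Lemma kst_psi_S m r j : (j < m)%N -> kst m.+1 (psi m r) j.+1 = kst m.+1 r j.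
Proof.
move=> lt; rewrite /kst big_ord_recl big_ord_recr /= ltnS ltnNge (ltnW lt) lt /= addnC.
by rewrite orbF; congr (_ + _)%N.
Qed.

Lemma tl_psi m r i : (i < m.+1)%N -> tl m.+1 (psi m r) i = rot m (tl m.+1 r) i.
Proof.
case: i => [|j] lt; first by rewrite /tl /rot /= kst_psi_0 exprS mulrA.
by rewrite /tl /rot /= kst_psi_S.
Qed.

Lemma sz_psi m r : sz m.+1 (psi m r) = (sz m.+1 r).+1.
Proof. by rewrite /sz big_ord_recl [in RHS]big_ord_recr /= addSn addnC. Qed.

Lemma psi_unpsi m nu : (0 < nu 0%N)%N -> forall i, (i < m.+1)%N -> psi m (unpsi m nu) i = nu i.
Proof.
move=> h [|j] lt /=; first by rewrite /unpsi eqxx prednK.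
by rewrite /unpsi ltn_eqF.
Qed.

Lemma sz_unpsi m nu : (0 < nu 0%N)%N -> sz m.+1 nu = (sz m.+1 (unpsi m nu)).+1.
Proof. by move=> h; rewrite -sz_psi; apply: sz_ext => j lt; rewrite psi_unpsi. Qed.

Lemma unpsi_psi m r : forall i, (i < m.+1)%N -> unpsi m (psi m r) i = r i.
Proof.
move=> i lt; rewrite /unpsi /=; case: eqP => [->//|ne] //=.
Qed.

Lemma fac_neq0 m r : tl m.+1 (psi m r) 0 - tpar ^- m != 0.
Proof.
rewrite subr_eq0; apply/eqP => h.
have h' : qpar ^+ (psi m r 0) * tpar ^- (kst m.+1 (psi m r) 0) = qpar ^+ 0 * tpar ^- m.
  by rewrite expr0 mul1r; exact: h.
by case: (qtm_inj h').
Qed.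

Theorem Uniq n : forall d F, PF n d F -> (forall nu, (sz n nu <= d)%N -> F (tl n nu) = 0) ->
  forall x, F x = 0.
Proof.
elim: n => [|m IHm] d F HF Hz x.
  rewrite (PF_dep HF (y := tl 0 (fun _ => 0%N))) //; apply: Hz; by rewrite /sz big_ord0.
elim: d F HF Hz x => [|d IHd] F HF Hz x.
  rewrite (PF_const0 HF erefl x (tl m.+1 (fun _ => 0%N))); apply: Hz; by rewrite /sz big1.
set c := tpar ^- m.
have F'0 : forall y, F (cons_pt c y) = 0.
  apply: (IHm d.+1 (fun y => F (cons_pt c y))).
    apply: (PF_subst HF (s := cons_pt c)) => -[|i] lt /=; [exact: PFc| exact: PFv].
  move=> nu hnu; rewrite (PF_dep HF (y := tl m.+1 (cons0 nu))); first by apply: Hz; rewrite sz_cons0.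
  by move=> i _; rewrite tl_cons0.
have [G [PG EG]] := PF_divdiff HF (ltn0Sn m) c.
have EF : forall y, F y = (y 0%N - c) * G y by move=> y; rewrite EG F'0 add0r.
have H0 : forall y, G (rot m y) = 0.
  apply: (IHd (fun y => G (rot m y))).
    apply: (PF_subst PG (s := rot m)) => -[|i] lt; rewrite /rot /cons_pt.
      exact: (PF_scale qpar (PFv (ltnSn m) (isT : (0<1)%N))).
    exact: (PFv (ltnW lt) (isT : (0<1)%N)).
  move=> r hr.
  have Hp : F (tl m.+1 (psi m r)) = 0 by apply: Hz; rewrite sz_psi.
  rewrite EF in Hp; move/eqP: Hp; rewrite mulf_eq0 (negbTE (fac_neq0 m r)) /= => /eqP Hp.
  by rewrite -Hp; apply: (PF_dep PG) => i lt; rewrite tl_psi.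
have -> : F x = (x 0%N - c) * G x by [].
pose y : pt := fun i => if i == m then x 0%N / qpar else x i.+1.
rewrite (PF_dep PG (y := rot m y)) ?H0 ?mulr0 // => -[|j] lt; rewrite /rot /cons_pt /y.
  by rewrite eqxx mulrC divfK // qpar_neq0.
by rewrite ltn_eqF.
Qed.

Theorem Xvan n : forall d mu F, sz n mu = d -> PF n d F ->
  (forall nu, (sz n nu <= d)%N -> ~ (forall i, (i < n)%N -> nu i = mu i) -> F (tl n nu) = 0) ->
  forall nu i0, (i0 < n)%N -> nu i0 = 0%N -> (forall j, (j <= i0)%N -> (0 < mu j)%N) ->
  F (tl n nu) = 0.
Proof.
case: n => [|m] d mu F Hsz HF Hz nu i0 lti0 //.
elim: d mu F Hsz HF Hz nu i0 lti0 => [|d IHd] mu F Hsz HF Hz nu i0 lti0 hnu hmu.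
  have := hmu 0%N (leq0n _); move: Hsz; rewrite /sz big_ord_recl /=.
  by case: (mu 0%N).
set c := tpar ^- m.
have mu0 : (0 < mu 0%N)%N by apply: hmu.
have F'0 : forall y, F (cons_pt c y) = 0.
  apply: (Uniq (n := m) (d := d.+1) (F := fun y => F (cons_pt c y))).
    apply: (PF_subst HF (s := cons_pt c)) => -[|i] lt /=; [exact: PFc| exact: PFv].
  move=> nu' hnu'; rewrite (PF_dep HF (y := tl m.+1 (cons0 nu'))).
    apply: Hz; first by rewrite sz_cons0.
    by move=> /(_ 0%N (ltn0Sn _)) /= h; rewrite -h in mu0.
  by move=> i _; rewrite tl_cons0.
have [G [PG EG]] := PF_divdiff HF (ltn0Sn m) c.
have EF : forall y, F y = (y 0%N - c) * G y by move=> y; rewrite EG F'0 add0r.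
case: (posnP (nu 0%N)) => nu0.
  rewrite (PF_dep HF (y := cons_pt c (fun j => tl m.+1 nu j.+1))) ?F'0 // => -[|j] _ //.
  by rewrite /tl /cons_pt nu0 kst0 // expr0 mul1r.
case: i0 lti0 hnu hmu => [|i1] lti0 hnu hmu; first by rewrite hnu in nu0.
pose mu' := unpsi m mu.
have H0 : (fun y => G (rot m y)) (tl m.+1 (unpsi m nu)) = 0.
  apply: (IHd mu' (fun y => G (rot m y)) _ _ _ _ i1).
  - by move: Hsz; rewrite (sz_unpsi m mu0) => -[].
  - apply: (PF_subst PG (s := rot m)) => -[|i] lt; rewrite /rot /cons_pt.
      exact: (PF_scale qpar (PFv (ltnSn m) (isT : (0<1)%N))).
    exact: (PFv (ltnW lt) (isT : (0<1)%N)).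
  - move=> r hr hne.
    have Hp : F (tl m.+1 (psi m r)) = 0.
      apply: Hz; first by rewrite sz_psi.
      move=> h; apply: hne => i lt; rewrite -(@unpsi_psi m r i lt) /mu' /unpsi.
      case: eqP => [_|ne]; first by rewrite h.
      by rewrite h // ltn_neqAle (introN eqP ne) -ltnS.
    rewrite EF in Hp; move/eqP: Hp; rewrite mulf_eq0 (negbTE (fac_neq0 m r)) /= => /eqP Hp.
    by rewrite -Hp; apply: (PF_dep PG) => i lt; rewrite tl_psi.
  - exact: ltnW.
  - by rewrite /unpsi ltn_eqF.
  - move=> j lej; rewrite /mu' /unpsi ltn_eqF; first by apply: hmu.
    exact: leq_ltn_trans lej lti0.
rewrite EF; apply/eqP; rewrite mulf_eq0; apply/orP; right; apply/eqP.
rewrite -H0 /=; apply: (PF_dep PG) => i lt.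
by rewrite -tl_psi //; apply: tl_ext => // j ltj; rewrite psi_unpsi.
Qed.

End Mod_C.
Import Mod_C.

Module Mod_C2.
Set Implicit Arguments. Unset Strict Implicit. Unset Printing Implicit Defensive.
Import GRing.Theory.
Local Open Scope ring_scope.

Definition sw (p l : nat) : nat := if l == p then p.+1 else if l == p.+1 then p else l.

Lemma sw_lt p l j : ~~ ((l == p) || (l == p.+1)) || ~~ ((j == p) || (j == p.+1)) ->
  (sw p l < j)%N = (l < sw p j)%N.
Proof. rewrite /sw. case: (l =P p); case: (l =P p.+1); case: (j =P p); case: (j =P p.+1); lia. Qed.

Lemma swK p : involutive (sw p).
Proof.
move=> l; rewrite /sw; case: (l =P p) => [->|h1]; first by rewrite (gtn_eqF (ltnSn p)) eqxx.
case: (l =P p.+1) => [->|h2]; first by rewrite eqxx.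
by rewrite (introF eqP h1) (introF eqP h2).
Qed.

Lemma sw_ltn p n l : (p.+1 < n)%N -> (l < n)%N -> (sw p l < n)%N.
Proof. rewrite /sw; case: (l =P p); case: (l =P p.+1); lia. Qed.

Lemma kst_eqadj n nu p : (p.+1 < n)%N -> nu p = nu p.+1 -> kst n nu p = (kst n nu p.+1).+1.
Proof.
move=> lt e; rewrite /kst.
transitivity (\sum_(l < n) ((((l < p.+1) && (nu p.+1 < nu l)) || ((p.+1 < l) && (nu p.+1 <= nu l))) + (l == p.+1 :> nat)))%N.
  apply: eq_bigr => l _; case: (ltngtP l p.+1) => h.
  - case: (ltngtP l p) => h'.
    + by rewrite e /= ?orbF ?addn0.
    + by move: h h'; lia.
    + by rewrite h' e ltnn.
  - by rewrite [(l < p)%N]ltnNge (ltnW (ltnW h)) /= e ?orbF addn0.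
  - by rewrite h [(p.+1 < p)%N]ltnNge leqnSn /= e leqnn.
rewrite big_split /=.
suff -> : (\sum_(l < n) (l == p.+1 :> nat))%N = 1%N by rewrite addn1.
rewrite (bigD1 (Ordinal lt)) //= eqxx big1 // => l hl.
by apply/eqP; rewrite eqb0; apply: contra hl => /eqP h; apply/eqP; apply: val_inj.
Qed.

Lemma kst_sw n nu p j : (p.+1 < n)%N -> nu p != nu p.+1 -> (j < n)%N ->
  kst n (fun l => nu (sw p l)) j = kst n nu (sw p j).
Proof.
move=> lt ne ltj; rewrite /kst.
have hsw : forall l : 'I_n, (sw p l < n)%N by move=> l; apply: sw_ltn.
pose h := fun l : 'I_n => Ordinal (hsw l).
have hinj : injective h.
  by move=> a b /(congr1 val) /= /(congr1 (sw p)); rewrite !swK => /val_inj.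
rewrite (reindex_inj hinj) /=; apply: eq_bigr => l _; rewrite swK.
have [both|nb] := boolP (((nat_of_ord l == p) || (nat_of_ord l == p.+1)) && ((j == p) || (j == p.+1))).
  move: both ne; rewrite /sw.
  case/andP => /orP[] /eqP -> /orP[] /eqP ->; rewrite ?eqxx ?(gtn_eqF (ltnSn p)) ?ltnn ?ltnSn //=.
  1,2: by rewrite [(p.+1 < p)%N]ltnNge leqnSn /=; move=> ne; lia.
rewrite negb_and in nb.
rewrite (sw_lt nb).
have nb' : ~~ ((j == p) || (j == p.+1)) || ~~ ((nat_of_ord l == p) || (nat_of_ord l == p.+1)) by rewrite orbC.
by rewrite -(sw_lt nb').
Qed.

End Mod_C2.
Import Mod_C2.

Module Mod_D.
Set Implicit Arguments. Unset Strict Implicit. Unset Printing Implicit Defensive.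
Import GRing.Theory.
Local Open Scope ring_scope.

Definition nf n (nu : 'X_{1..n}) : nat -> nat :=
  fun i => match (insub i : option 'I_n) with Some j => nu j | None => 0%N end.

Lemma nfE n (nu : 'X_{1..n}) (j : 'I_n) : nf nu j = nu j.
Proof. by rewrite /nf valK. Qed.

Lemma kstatE n (nu : 'X_{1..n}) (i : 'I_n) : kstat nu i = kst n (nf nu) i.
Proof.
rewrite /kstat /kst -sum1dep_card big_mkcond /=; apply: eq_bigr => j _.
by rewrite !nfE; case: ifP.
Qed.

Lemma tildeE n (nu : 'X_{1..n}) (i : 'I_n) : tilde nu i = tl n (nf nu) i.
Proof. by rewrite /tilde /tl kstatE nfE. Qed.

Lemma szE n (nu : 'X_{1..n}) : sz n (nf nu) = mdeg nu.
Proof. by rewrite /sz mdegE; apply: eq_bigr => j _; rewrite nfE. Qed.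

Definition mkm n (v : nat -> nat) : 'X_{1..n} := [multinom v i | i < n].

Lemma nf_mkm n v i : (i < n)%N -> nf (mkm n v) i = v i.
Proof. by move=> lt; rewrite /nf insubT /mkm mnmE. Qed.

Definition evalF n (E : {mpoly QqtK[n]}) : pt -> QqtK := fun x => E.@[fun i : 'I_n => x i].

Lemma evalF_tl n (E : {mpoly QqtK[n]}) nu : evalF E (tl n (nf nu)) = E.@[tilde nu].
Proof. by apply: meval_eq => i; rewrite tildeE. Qed.

Lemma Estar_van n (mu : 'X_{1..n}) E : is_Estar mu E ->
  forall (nu : 'X_{1..n}) (i0 : 'I_n), nu i0 = 0%N -> (forall j : 'I_n, (j <= i0)%N -> (0 < mu j)%N) ->
  E.@[tilde nu] = 0.
Proof.
case=> Hs _ Hz nu i0 h0 hmu.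
rewrite -evalF_tl.
apply: (@Xvan n (mdeg mu) (nf mu) (evalF E) _ _ _ (nf nu) i0).
- exact: szE.
- exact: PF_mpoly.
- move=> v hv hne.
  rewrite (@PF_dep _ _ (evalF E) (PF_mpoly Hs) _ (tl n (nf (mkm n v)))); last first.
    by move=> i lt; apply: tl_ext => // j lj; rewrite nf_mkm.
  rewrite evalF_tl; apply: Hz.
    by rewrite -szE (@sz_ext _ _ v) // => j lj; rewrite nf_mkm.
  apply/eqP => e; apply: hne => i lt; rewrite -e nf_mkm //.
- exact: ltn_ord.
- by rewrite nfE.
- move=> j lej; have ltj : (j < n)%N by apply: leq_ltn_trans lej (ltn_ord i0).
  by rewrite -[j]/(nat_of_ord (Ordinal ltj)) nfE; apply: hmu.
Qed.

End Mod_D.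
Import Mod_D.

Module Mod_E.
Set Implicit Arguments. Unset Strict Implicit. Unset Printing Implicit Defensive.
Import GRing.Theory.
Local Open Scope ring_scope.

Section Hk.
Variables (n i : nat) (lt : (i.+1 < n)%N).
Let pa : 'I_n := Ordinal (ltnW lt).
Let pb : 'I_n := Ordinal lt.

Lemma sperm_E : sperm n i = tperm pa pb.
Proof.
rewrite /sperm (insubT (fun k => k < n)%N (ltnW lt)) (insubT (fun k => k < n)%N lt).
by congr tperm; apply: val_inj.
Qed.

Lemma xvar_a : xvar n i = 'X_pa.
Proof. by rewrite /xvar (insubT (fun k => k < n)%N (ltnW lt)); congr (mpolyX _ _); apply: val_inj. Qed.
Lemma xvar_b : xvar n i.+1 = 'X_pb.
Proof. by rewrite /xvar (insubT (fun k => k < n)%N lt); congr (mpolyX _ _); apply: val_inj. Qed.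

End Hk.

Lemma msym_eval n (s : 'S_n) (f : {mpoly QqtK[n]}) (a : 'I_n -> QqtK) :
  (msym s f).@[a] = f.@[fun j => a (s j)].
Proof.
elim/mpolyind: f.
  by rewrite msym0 !meval0.
move=> c m p _ _ IH.
rewrite msymD msymZ !mevalD; congr (_ + _); last exact: IH.
rewrite !mevalZ msymX !mevalX; congr (_ * _).
rewrite (reindex_inj (@perm_inj _ s)) /=; apply: eq_bigr => j _.
by rewrite mnmE permK.
Qed.

Lemma msymXU n (s : 'S_n) (j : 'I_n) : msym s ('X_j : {mpoly QqtK[n]}) = 'X_(s j).
Proof.
rewrite msymX; apply: f_equal; apply/mnmP => l; rewrite !mnmE.
by rewrite -(inj_eq (@perm_inj _ s)) permKV.
Qed.


Lemma gen_mul (R : comRingType) (f g D h1 h2 : R) :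
  f*g - (f - D*h1)*(g - D*h2) = D*(f*h2 + h1*(g - D*h2)).
Proof. ring. Qed.
Lemma gen_sub (R : comRingType) (f D h : R) : f - D * h = f - (f - D * h) -> True.
Proof. by []. Qed.
Lemma gen_add (R : comRingType) (a b c d : R) : (a + b) - (c + d) = (a - c) + (b - d).
Proof. ring. Qed.
Lemma gen_scale (R : comRingType) (c f s D h : R) : s = f - D * h -> c * f - c * s = D * (c * h).
Proof. move=> ->; ring. Qed.
Lemma gen_neg (R : comRingType) (a b : R) : b - a = (a - b) * (-1).
Proof. ring. Qed.

Section Div.
Variables (n : nat) (pa pb : 'I_n).
Let D : {mpoly QqtK[n]} := 'X_pa - 'X_pb.
Let sg : 'S_n := tperm pa pb.
Let S (f : {mpoly QqtK[n]}) := exists h, f - msym sg f = D * h.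

Lemma S_add f g : S f -> S g -> S (f + g).
Proof. by move=> [h1 e1] [h2 e2]; exists (h1 + h2); rewrite msymD mulrDr -e1 -e2 gen_add. Qed.

Lemma S_inv f h : f - msym sg f = D * h -> msym sg f = f - D * h.
Proof. by move=> e; rewrite -e opprB addrC subrK. Qed.

Lemma S_mul f g : S f -> S g -> S (f * g).
Proof.
move=> [h1 /S_inv e1] [h2 /S_inv e2]; exists (f * h2 + h1 * (g - D * h2)).
by rewrite msymM e1 e2 gen_mul.
Qed.

Lemma S_scale c f : S f -> S (c *: f).
Proof.
move=> [h /S_inv e]; exists (c%:MP * h); rewrite msymZ -!mul_mpolyC.
exact: gen_scale.
Qed.

Lemma S_one : S 1.
Proof. by exists 0; rewrite msym1 subrr mulr0. Qed.

Lemma S_var j : S 'X_j.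
Proof.
rewrite /S msymXU /sg; case: tpermP => [e|e|na nb]; rewrite ?e.
- by exists 1; rewrite mulr1.
- by exists (-1); rewrite /D gen_neg.
- by exists 0; rewrite subrr mulr0.
Qed.

Lemma S_all f : S f.
Proof.
rewrite [f]mpolyE; apply: (big_ind S).
- by exists 0; rewrite msym0 subrr mulr0.
- exact: S_add.
- move=> m _; apply: S_scale; rewrite mpolyXE_id.
  apply: (big_ind S); [exact: S_one|exact: S_mul|move=> j _].
  elim: (m j) => [|k IH]; first by rewrite expr0; exact: S_one.
  by rewrite exprS; exact: (S_mul (S_var j) IH).
Qed.
End Div.

End Mod_E.
Import Mod_E.

Module Mod_F.
Set Implicit Arguments. Unset Strict Implicit. Unset Printing Implicit Defensive.
Import GRing.Theory.
Local Open Scope ring_scope.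

Lemma gen_hk (R : comRingType) (D T f A h : R) :
  D * (T * f - A * h) = T * D * f - A * (D * h).
Proof. ring. Qed.

Lemma gen_t (F : fieldType) (t q : F) k : t != 0 -> t * (q * (t ^+ k.+1)^-1) = q * (t ^+ k)^-1.
Proof.
move=> tn; have tk : t ^+ k != 0 by rewrite expf_neq0.
rewrite exprS invfM; field; rewrite ?tk ?tn //.
Qed.

Definition Vk n k (f : {mpoly QqtK[n]}) := forall (nu : 'X_{1..n}) (i0 : 'I_n),
  (i0 < k)%N -> nu i0 = 0%N -> f.@[tilde nu] = 0.

Section HV.
Variables (n i : nat) (lt : (i.+1 < n)%N).
Let pa : 'I_n := Ordinal (ltnW lt).
Let pb : 'I_n := Ordinal lt.

Lemma Hecke_specP (f : {mpoly QqtK[n]}) : Hecke_spec i f (Hecke i f).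
Proof.
rewrite /Hecke; apply: epsilon_spec.
have [h e] := S_all pa pb f.
exists (tpar%:MP * f - (tpar%:MP * xvar n i - xvar n i.+1) * h).
by rewrite /Hecke_spec (sperm_E lt) (xvar_a lt) (xvar_b lt) e gen_hk.
Qed.

Lemma Hecke_eval (f : {mpoly QqtK[n]}) (a : 'I_n -> QqtK) :
  (a pa - a pb) * (Hecke i f).@[a] =
  tpar * (a pa - a pb) * f.@[a] - (tpar * a pa - a pb) * (f.@[a] - f.@[fun j => a (tperm pa pb j)]).
Proof.
have := Hecke_specP f; rewrite /Hecke_spec (sperm_E lt) (xvar_a lt) (xvar_b lt).
move=> /(congr1 (meval a)).
rewrite !(mevalM, mevalB, mevalC, mevalXU, msym_eval).
by [].
Qed.

Lemma val_tperm (j : 'I_n) : nat_of_ord (tperm pa pb j) = sw i j.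
Proof.
rewrite /sw; case: tpermP => [->|->|na nb] /=; first by rewrite eqxx.
  by rewrite (gtn_eqF (ltnSn i)) eqxx.
have h1 : (nat_of_ord j == i) = false by apply/eqP => e; apply: na; apply: val_inj.
have h2 : (nat_of_ord j == i.+1) = false by apply/eqP => e; apply: nb; apply: val_inj.
by rewrite h1 h2.
Qed.

Lemma T1 (nu : 'X_{1..n}) : tilde nu pa != tilde nu pb.
Proof.
rewrite !tildeE /tl /=; apply/eqP => /qtm_inj [e1 e2].
by move: e2; rewrite kst_eqadj // => /eqP; rewrite -[X in _ == X]addn0 -addn1 eqn_add2l.
Qed.

Lemma T2 (nu : 'X_{1..n}) : nu pa = nu pb -> tpar * tilde nu pa = tilde nu pb.
Proof.
move=> e; have e' : nf nu i = nf nu i.+1 by rewrite -[i]/(nat_of_ord pa) -[i.+1]/(nat_of_ord pb) !nfE.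
rewrite !tildeE /tl /= kst_eqadj // e'; apply: gen_t; exact: tpar_neq0.
Qed.

Lemma T3 (nu : 'X_{1..n}) : nu pa != nu pb -> forall j,
  tilde nu (tperm pa pb j) = tilde (mkm n (fun l => nf nu (sw i l))) j.
Proof.
move=> ne j; have e' : nf nu i != nf nu i.+1 by rewrite -[i]/(nat_of_ord pa) -[i.+1]/(nat_of_ord pb) !nfE.
rewrite !tildeE [RHS](@tl_ext n _ (fun l => nf nu (sw i l))) //; last by move=> l ll; rewrite nf_mkm.
by rewrite /tl val_tperm kst_sw.
Qed.
End HV.

Lemma Hecke_V n k i (f : {mpoly QqtK[n]}) : (i.+1 < n)%N -> i.+1 != k -> Vk k f -> Vk k (Hecke i f).
Proof.
move=> lt nk V nu i0 lti0 h0.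
pose pa : 'I_n := Ordinal (ltnW lt); pose pb : 'I_n := Ordinal lt.
have E := Hecke_eval lt f (tilde nu).
have f0 : f.@[tilde nu] = 0 by apply: (V nu i0).
have dn : tilde nu pa - tilde nu pb != 0 by rewrite subr_eq0 T1.
have : (tilde nu pa - tilde nu pb) * (Hecke i f).@[tilde nu] = 0.
  rewrite E f0 mulr0 sub0r.
  case: (eqVneq (nu pa) (nu pb)) => e.
    by rewrite (T2 e) subrr mul0r oppr0.
  have -> : f.@[fun j => tilde nu (tperm pa pb j)] = 0.
    rewrite (meval_eq _ (T3 e)).
    apply: (V _ (tperm pa pb i0)).
      rewrite val_tperm /sw; move: lti0 nk; case: (nat_of_ord i0 =P i); case: (nat_of_ord i0 =P i.+1); lia.
    rewrite /mkm mnmE val_tperm swK.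
    by rewrite -[nat_of_ord i0]/(nat_of_ord i0) nfE.
  by rewrite subrr mulr0 oppr0.
by move/eqP; rewrite mulf_eq0 (negbTE dn) /= => /eqP.
Qed.

Lemma Hecke_word_V n k (w : seq nat) (f : {mpoly QqtK[n]}) :
  all (fun i => i.+1 < n)%N w -> all (fun i => i.+1 != k) w -> Vk k f -> Vk k (Hecke_word w f).
Proof.
elim: w => [|i w IH] //= /andP[lt aw] /andP[nk ak] V.
by apply: Hecke_V => //; apply: IH.
Qed.

End Mod_F.
Import Mod_F.

Module Mod_G.
Set Implicit Arguments. Unset Strict Implicit. Unset Printing Implicit Defensive.

Lemma sorted_geq_pos (s : seq nat) i : sorted geq s -> i < size s ->
  (0 < nth 0 s i) = (i < count (fun x => 0 < x) s).
Proof.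
elim: s i => [|x s IH] i //= srt lt.
have srt' : sorted geq s by case: s srt {IH lt} => //= y s /andP[].
have allx : all (geq x) s := order_path_min (fun a b c h1 h2 => leq_trans h2 h1) srt.
case: x allx srt => [|x] allx srt.
  have c0 : count (fun x => 0 < x) s = 0.
    by rewrite (eq_in_count (a2 := pred0)) ?count_pred0 // => y ys; move: (allP allx y ys); rewrite /geq /= leqn0 => /eqP ->.
  rewrite /= add0n c0; case: i lt => [|i] lt //=.
  have : nth 0 s i \in s by apply: mem_nth.
  by move=> /(allP allx); rewrite /geq; case: (nth 0 s i).
case: i lt => [|i] lt //=.
by rewrite IH // add1n ltnS.
Qed.

Lemma count_iota_lt k n : k <= n -> count (fun j => j < k) (iota 0 n) = k.
Proof.
move=> le; rewrite -(subnKC le) iotaD count_cat add0n.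
rewrite (eq_in_count (a2 := predT)) ?count_predT ?size_iota; last by move=> j; rewrite mem_iota.
rewrite (eq_in_count (a2 := pred0)) ?count_pred0 ?addn0 // => j; rewrite mem_iota => /andP[h _].
by rewrite /= ltnNge h.
Qed.

Lemma sorted_part_packed n k (mu : 'X_{1..n}) : k <= n ->
  (forall i : 'I_n, (0 < mu i) = (i < k)) -> forall j : 'I_n, (0 < sorted_part mu j) = (j < k).
Proof.
move=> le hmu j; rewrite /sorted_part mnmE sorted_geq_pos.
- rewrite count_sort count_map (eq_count (a2 := fun i : 'I_n => (val i < k))); last by move=> i; rewrite /= hmu.
  by rewrite -(count_map val (fun j => j < k)) val_enum_ord count_iota_lt.
- by apply: sort_sorted => a b; apply: leq_total.
- by rewrite size_sort size_map size_enum_ord.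
Qed.

Lemma shortest_block n k (lam mu : 'X_{1..n}) (s : 'S_n) :
  (forall i : 'I_n, (0 < lam i) = (i < k)) -> (forall i : 'I_n, (0 < mu i) = (i < k)) ->
  act_comp s lam = mu -> forall x : 'I_n, (s x < k) = (x < k).
Proof. by move=> hl hm e x; rewrite -hm -e /act_comp mnmE permK hl. Qed.

Lemma word_perm_cons n i w : word_perm n (i :: w) = (word_perm n w * sperm n i)%g.
Proof. by []. Qed.

Lemma word_perm_cat n u w : word_perm n (u ++ w) = (word_perm n w * word_perm n u)%g.
Proof.
elim: u => [|i u IH] /=; first by rewrite mulg1.
by rewrite IH mulgA.
Qed.

Lemma sperm_val n i (z : 'I_n) : i.+1 < n -> nat_of_ord (sperm n i z) = sw i z.
Proof. by move=> lt; rewrite (sperm_E lt) val_tperm. Qed.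

Definition Ip n (s : 'S_n) (p : 'I_n * 'I_n) : bool := (p.1 < p.2) && (s p.2 < s p.1).
Definition tg n (s : 'S_n) i (p : 'I_n * 'I_n) : bool :=
  (p.1 < p.2) && ([&& nat_of_ord (s p.1) == i & nat_of_ord (s p.2) == i.+1]
                || [&& nat_of_ord (s p.1) == i.+1 & nat_of_ord (s p.2) == i]).
Fixpoint Np n (p : 'I_n * 'I_n) (w : seq nat) : nat :=
  if w is i :: w' then tg (word_perm n w') i p + Np p w' else 0.

Lemma perm_lengthE n (s : 'S_n) : perm_length s = \sum_p (Ip s p : nat).
Proof. by rewrite /perm_length -sum1dep_card big_mkcond /=; apply: eq_bigr => p _; rewrite /Ip; case: ifP. Qed.

Lemma Ip_step n (s : 'S_n) i p : i.+1 < n ->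
  Ip (s * sperm n i)%g p <= Ip s p + tg s i p.
Proof.
move=> lt; rewrite /Ip /tg !permM !sperm_val //.
case lt12: (p.1 < p.2) => //=.
have : (nat_of_ord (s p.1) != nat_of_ord (s p.2)).
  by apply/eqP => /val_inj /perm_inj e; rewrite e ltnn in lt12.
set a := nat_of_ord (s p.1); set b := nat_of_ord (s p.2).
rewrite /sw; case: (a =P i); case: (a =P i.+1); case: (b =P i); case: (b =P i.+1); lia.
Qed.

Lemma tg_uniq n (s : 'S_n) i p q : tg s i p -> tg s i q -> p = q.
Proof.
case: p => p1 p2; case: q => q1 q2; rewrite /tg /=.
have E : forall x y : 'I_n, nat_of_ord (s x) = nat_of_ord (s y) -> x = y.
  by move=> x y /val_inj /perm_inj.
case/andP=> lp /orP[]/andP[/eqP a1 /eqP a2]; case/andP=> lq /orP[]/andP[/eqP b1 /eqP b2].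
- by rewrite (E p1 q1) ?a1 ?b1 // (E p2 q2) ?a2 ?b2.
- have e1 : p1 = q2 by apply: E; rewrite a1 b2.
  have e2 : p2 = q1 by apply: E; rewrite a2 b1.
  by move: lp lq; rewrite e1 e2; lia.
- have e1 : p1 = q2 by apply: E; rewrite a1 b2.
  have e2 : p2 = q1 by apply: E; rewrite a2 b1.
  by move: lp lq; rewrite e1 e2; lia.
- by rewrite (E p1 q1) ?a1 ?b1 // (E p2 q2) ?a2 ?b2.
Qed.

Lemma tg_le1 n (s : 'S_n) i : \sum_p (tg s i p : nat) <= 1.
Proof.
have -> : \sum_p (tg s i p : nat) = #|[set p | tg s i p]|.
  by rewrite -sum1dep_card [RHS]big_mkcond /=; apply: eq_bigr => p _; case: ifP.
apply/card_le1P => p; rewrite inE => hp q; rewrite inE.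
apply/idP/eqP => [hq|->//]; exact: (tg_uniq hq hp).
Qed.

Lemma Ip_le_Np n (w : seq nat) p : all (fun i => i.+1 < n) w -> Ip (word_perm n w) p <= Np p w.
Proof.
elim: w => [|i w IH] /=.
  by rewrite /Ip !perm1; case: (ltngtP p.1 p.2).
case/andP=> lt aw; apply: leq_trans (Ip_step _ _ lt) _.
by rewrite addnC leq_add2l IH.
Qed.

Lemma sum_Np n (w : seq nat) : \sum_(p : 'I_n * 'I_n) Np p w <= size w.
Proof.
elim: w => [|i w IH] /=; first by rewrite big1.
rewrite big_split /= -add1n; apply: leq_add => //; exact: tg_le1.
Qed.

Lemma sum_eq_le (T : finType) (a b : T -> nat) : (forall p, a p <= b p) ->
  \sum_p b p <= \sum_p a p -> forall p, a p = b p.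
Proof.
move=> le S p; apply/eqP; rewrite eqn_leq le /=; case: (leqP (b p) (a p)) => // lt.
have : \sum_p a p < \sum_p b p.
  rewrite [X in X < _](bigD1 p) // [X in _ < X](bigD1 p) //=.
  rewrite -addSn; apply: leq_add => //.
  by apply: leq_sum => q _; apply: le.
by rewrite ltnNge S.
Qed.

Lemma reduced_eq n (s : 'S_n) w : is_reduced_word s w -> forall p, (Ip s p : nat) = Np p w.
Proof.
case=> aw ws sz; apply: sum_eq_le => [p|].
  by rewrite -ws; apply: Ip_le_Np.
by rewrite -perm_lengthE -sz; apply: sum_Np.
Qed.

Lemma split_first (P : pred nat) w : has P w ->
  exists u b v, [/\ w = u ++ b :: v, P b & all (predC P) u].
Proof.
elim: w => [|a w IH] //= /orP[pa|hw].
  by exists [::], a, w.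
case pa: (P a).
  by exists [::], a, w.
have [u [b [v [e pb au]]]] := IH hw.
by exists (a :: u), b, v; rewrite e /= pa.
Qed.

Lemma Np_cat n (p : 'I_n * 'I_n) u w : Np p w <= Np p (u ++ w).
Proof. by elim: u => [|i u IH] //=; apply: leq_trans IH (leq_addl _ _). Qed.

Lemma block_u n k u : all (fun i => i.+1 < n) u -> all (fun i => i.+1 != k) u ->
  forall z : 'I_n, (word_perm n u z < k) = (z < k).
Proof.
elim: u => [|i u IH] //=; first by move=> _ _ z; rewrite perm1.
case/andP=> lt au /andP[nk ak] z; rewrite permM sperm_val // -(IH au ak z).
move: nk; rewrite /sw; set y := nat_of_ord _.
case: (y =P i); case: (y =P i.+1); lia.
Qed.

Lemma no_bad n k (s : 'S_n) w : is_reduced_word s w ->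
  (forall x : 'I_n, (s x < k) = (x < k)) -> all (fun i => i.+1 != k) w.
Proof.
move=> red blk; apply/negPn/negP; rewrite -has_predC => bad.
have [u [b [v [e pb au]]]] := split_first bad.
have red' := red; case: red' => aw ws _.
move: pb; rewrite /= negbK => /eqP bk.
move: aw; rewrite e all_cat /= => /and3P[auv ltb av].
have au' : all (fun i => i.+1 != k) u.
  by apply/allP => i /(allP au); rewrite /= negbK.
pose sv := word_perm n v.
pose ob : 'I_n := Ordinal (ltnW ltb); pose ok : 'I_n := Ordinal ltb.
pose x := (sv^-1)%g ob; pose y := (sv^-1)%g ok.
have sE : forall z, s z = word_perm n u (sperm n b (sv z)).
  by move=> z; rewrite -ws e word_perm_cat word_perm_cons !permM.
have sx : (s x < k) = false.
  rewrite sE /x permKV block_u // sperm_val //= /sw eqxx bk ltnn //.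
have sy : (s y < k) = true.
  rewrite sE /y permKV block_u // sperm_val //= /sw (gtn_eqF (ltnSn b)) eqxx -bk ltnSn //.
have xk : (x < k) = false by rewrite -blk.
have yk : (y < k) = true by rewrite -blk.
have yx : y < x by move: xk yk; lia.
have := reduced_eq red (y, x).
have : 1 <= Np (y, x) w.
  rewrite e; apply: leq_trans (Np_cat _ _ _) => /=.
  rewrite /tg /= yx /= /sv /x /y !permKV /= eqxx (gtn_eqF (ltnSn b)) /=.
  by rewrite eqxx.
move=> h1 h2; rewrite -h2 in h1.
move: h1; rewrite /Ip /= yx /=.
by move: sx sy; lia.
Qed.

End Mod_G.
Import Mod_G.

Unset Implicit Arguments.
Set Strict Implicit.

Theorem lemma3p10 (n k : nat) (mu nu : 'X_{1..n}) :
  1 <= k <= n ->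
  (forall i : 'I_n, i < k -> mu i != 0) ->
  (forall i : 'I_n, k <= i -> mu i = 0) ->
  (exists i0 : 'I_n, i0 < k /\ nu i0 = 0) ->
  [/\ ~ preceq mu nu,
      (forall E : {mpoly QqtK[n]}, is_Estar mu E -> E.@[tilde nu] = 0%R)
    & (forall F : {mpoly QqtK[n]}, is_fstar mu F -> F.@[tilde nu] = 0%R)].
Proof.
move=> /andP[k1 kn] hnz hz [i0 [lti0 h0]].
have hmu : forall i : 'I_n, (0 < mu i) = (i < k).
  by move=> i; case: (ltnP i k) => h; [rewrite lt0n hnz | rewrite hz].
split.
- case=> pi H; have [h1 h2] := H ((pi^-1)%g i0).
  rewrite permKV h0 in h1 h2; move: h1; rewrite leqn0 => /eqP mj0.
  have jk : k <= (pi^-1)%g i0 by rewrite leqNgt -hmu mj0.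
  have := h2 (leq_trans lti0 jk); by rewrite mj0.
- move=> E HE; apply: (Estar_van HE h0) => j lej; rewrite hmu; exact: leq_ltn_trans lej lti0.
- move=> F [E [s [w [HE [Hs1 Hs2] Hred ->]]]].
  have hl : forall i : 'I_n, (0 < sorted_part mu i) = (i < k) := sorted_part_packed kn hmu.
  have blk : forall x, (s x < k) = (x < k) := shortest_block hl hmu Hs1.
  have VE : Vk k E.
    move=> nu' i1 lt1 h1; apply: (Estar_van HE h1) => j lej; rewrite hl; exact: leq_ltn_trans lej lt1.
  have Hred' := Hred; case: Hred' => aw _ _.
  exact: (Hecke_word_V aw (no_bad Hred blk) VE lti0 h0).
Qed.
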